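(* Consider the augmented LSTM model and the observer described in the context, driven by inputs $u_k\in\mathcal{U}$ and by the measured output $y_k=W_yh_k+b_y+d_k$ of the augmented model. If $h_k\in\mathcal{H}$ and $d_k\in\mathcal{D}$ for all $k\ge0$, then the set $\hat{\mathcal{I}}=\hat{\mathcal{C}}\times\mathcal{H}\times\mathcal{D}$, with $\hat{\mathcal{C}}=\{\hat c\in\mathbb{R}^n:\|\hat c\|_\infty\le \hat{\bar\sigma}^i\bar\sigma^c/(1-\hat{\bar\sigma}^f)\}$, is positively invariant for the observer state $\hat\chi=[\hat c^\top\ \hat h^\top\ \hat d^\top]^\top$.
   Context: Augmented LSTM model ($c,h\in\mathbb{R}^n$, $u\in\mathbb{R}^m$, $d,w,y\in\mathbb{R}^p$): $c_{k+1}=\sigma(W_fu_k+U_fh_k+b_f)\circ c_k+\sigma(W_iu_k+U_ih_k+b_i)\circ\tanh(W_cu_k+U_ch_k+b_c)$, $h_{k+1}=\sigma(W_ou_k+U_oh_k+b_o)\circ\tanh(c_{k+1})$, $d_{k+1}=d_k+w_k$, $y_k=W_yh_k+b_y+d_k$; $\sigma$ the logistic sigmoid, activations elementwise, $\circ$ elementwise product. $\mathcal{U}=\{u:\|u\|_\infty\le u_{max}\}$, $\mathcal{H}=\{h:\|h\|_\infty\le1\}$, $\mathcal{D}=\{d:\|d\|_\infty\le d_{max}\}$. Observer with gains $L_f,L_i,L_o\in\mathbb{R}^{n\times p}$, $L_d\in\mathbb{R}^{p\times p}$: $\hat c_{k+1}=\sigma(W_fu_k+U_f\hat h_k+b_f+L_f(y_k-\hat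 y_k))\circ\hat c_k+\sigma(W_iu_k+U_i\hat h_k+b_i+L_i(y_k-\hat y_k))\circ\tanh(W_cu_k+U_c\hat h_k+b_c)$, $\hat h_{k+1}=\sigma(W_ou_k+U_o\hat h_k+b_o+L_o(y_k-\hat y_k))\circ\tanh(\hat c_{k+1})$, $\hat d_{k+1}=\mathrm{sat}(\hat d_k+L_d(y_k-\hat y_k),d_{max})$, $\hat y_k=W_y\hat h_k+b_y+\hat d_k$, where $\mathrm{sat}(v,v_{max})$ saturates each component to $[-v_{max},v_{max}]$. With $\|\cdot\|_\infty$ the induced $\infty$-norm of horizontally concatenated blocks: $\bar\sigma^c=\tanh(\|[W_cu_{max}\ U_c\ b_c]\|_\infty)$, $\hat{\bar\sigma}^f=\sigma(\|[W_fu_{max},\ U_f-L_fW_y,\ b_f,\ L_fW_y,\ 2L_fd_{max}]\|_\infty)$, $\hat{\bar\sigma}^i=\sigma(\|[W_iu_{max},\ U_i-L_iW_y,\ b_i,\ L_iW_y,\ 2L_id_{max}]\|_\infty)$. *)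

(* Defs.v *)
From HB Require Import structures.
From mathcomp Require Import all_boot all_order all_algebra.
From mathcomp Require Import all_classical all_reals all_analysis.
Set Implicit Arguments. Unset Strict Implicit. Unset Printing Implicit Defensive.
Import Order.TTheory GRing.Theory Num.Theory.
Local Open Scope ring_scope.

Section Defs.
Variable R : realType.

Definition sigmoid (x : R) : R := (1 + expR (- x))^-1.
Definition tanhR (x : R) : R := (expR x - expR (- x)) / (expR x + expR (- x)).

Definition sigv {a b} (A : 'M[R]_(a, b)) : 'M[R]_(a, b) := map_mx sigmoid A.
Definition tanhv {a b} (A : 'M[R]_(a, b)) : 'M[R]_(a, b) := map_mx tanhR A.
Definition hprod {a b} (A B : 'M[R]_(a, b)) : 'M[R]_(a, b) :=
  \matrix_(i, j) (A i j * B i j).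

Definition sat {a b} (A : 'M[R]_(a, b)) (vmax : R) : 'M[R]_(a, b) :=
  map_mx (fun x => Num.max (- vmax) (Num.min x vmax)) A.

(* induced infinity norm (max absolute row sum); for a column vector this is
   the vector infinity norm *)
Definition ninf {a b} (A : 'M[R]_(a, b)) : R :=
  \big[Num.max/0]_(i < a) \sum_(j < b) `|A i j|.

Definition sigma_c_bar {n m} (Wc : 'M[R]_(n, m)) (Uc : 'M[R]_n) (bc : 'cV[R]_n)
    (umax : R) : R :=
  tanhR (ninf (row_mx (row_mx (umax *: Wc) Uc) bc)).

Definition sigma_hat_bar {n m p} (Wg : 'M[R]_(n, m)) (Ug : 'M[R]_n)
    (bg : 'cV[R]_n) (Lg : 'M[R]_(n, p)) (Wy : 'M[R]_(p, n)) (umax dmax : R) : R :=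
  sigmoid (ninf (row_mx (row_mx (row_mx (row_mx (umax *: Wg) (Ug - Lg *m Wy)) bg)
                               (Lg *m Wy)) ((2 * dmax) *: Lg))).

End Defs.

(* Main.v *)
Require Import Defs.
From HB Require Import structures.
From mathcomp Require Import all_boot all_order all_algebra.
From mathcomp Require Import all_classical all_reals all_analysis.
From mathcomp Require Import ring lra.
Import Order.TTheory GRing.Theory Num.Theory.
Local Open Scope ring_scope.
Set Implicit Arguments. Unset Strict Implicit.

Lemma sig_gt0 (R : realType) (x : R) : 0 < sigmoid x.
Proof. by rewrite /sigmoid invr_gt0 addr_gt0 ?ltr01 ?expR_gt0. Qed.

Lemma sig_lt1 (R : realType) (x : R) : sigmoid x < 1.
Proof.
rewrite /sigmoid invf_lt1 ?addr_gt0 ?ltr01 ?expR_gt0 //.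
by rewrite ltrDl expR_gt0.
Qed.

Lemma sig_le (R : realType) (x y : R) : x <= y -> sigmoid x <= sigmoid y.
Proof.
move=> xy; rewrite /sigmoid lef_pV2 ?posrE ?addr_gt0 ?ltr01 ?expR_gt0 //.
by rewrite lerD2l ler_expR lerN2.
Qed.

Lemma sigN (R : realType) (x : R) : sigmoid (- x) = 1 - sigmoid x.
Proof.
rewrite /sigmoid opprK expRN.
have a0 := expR_gt0 x. have a1 : 0 < (expR x)^-1 by rewrite invr_gt0.
have h1 : 1 + expR x != 0 by rewrite gt_eqF // addr_gt0 ?ltr01.
have h2 : 1 + (expR x)^-1 != 0 by rewrite gt_eqF // addr_gt0 ?ltr01 ?invr_gt0.
have h3 : expR x != 0 by rewrite gt_eqF.
field; repeat (apply/andP; split); apply/eqP; first [lra | nra].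
Qed.

Lemma tanh_sig (R : realType) (x : R) : tanhR x = 2 * sigmoid (2 * x) - 1.
Proof.
rewrite /tanhR /sigmoid.
have -> : - (2 * x) = - x + - x by ring.
rewrite expRD !expRN.
have a0 := expR_gt0 x. have a1 : 0 < (expR x)^-1 by rewrite invr_gt0.
have h3 : expR x != 0 by rewrite gt_eqF.
have h1 : expR x + (expR x)^-1 != 0 by rewrite gt_eqF // addr_gt0 ?invr_gt0.
have h2 : 1 + (expR x)^-1 * (expR x)^-1 != 0
  by rewrite gt_eqF // addr_gt0 ?ltr01 // mulr_gt0 ?invr_gt0.
field; repeat (apply/andP; split); apply/eqP; first [lra | nra].
Qed.

Lemma tanh_le (R : realType) (x y : R) : x <= y -> tanhR x <= tanhR y.
Proof.
move=> xy; rewrite !tanh_sig lerD2r ler_pM2l ?ltr0n //.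
by apply: sig_le; rewrite ler_pM2l ?ltr0n.
Qed.

Lemma tanh0 (R : realType) : tanhR (0 : R) = 0.
Proof. by rewrite /tanhR oppr0 subrr mul0r. Qed.

Lemma tanh_ge0 (R : realType) (y : R) : 0 <= y -> 0 <= tanhR y.
Proof. by move=> y0; rewrite -(tanh0 R) tanh_le. Qed.

Lemma tanh_norm (R : realType) (x y : R) : `|x| <= y -> `|tanhR x| <= tanhR y.
Proof.
rewrite !ler_norml => /andP [h1 h2]; apply/andP; split; last exact: tanh_le.
rewrite !tanh_sig.
have H : 2 * - y <= 2 * x by rewrite ler_pM2l ?ltr0n.
have := @sig_le _ _ _ H; rewrite mulrN sigN.
lra.
Qed.

Lemma tanh_abs1 (R : realType) (x : R) : `|tanhR x| <= 1.
Proof.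
rewrite tanh_sig ler_norml.
have := sig_gt0 (2 * x); have := sig_lt1 (2 * x); lra.
Qed.

Definition rs (R : realType) a b (A : 'M[R]_(a, b)) i := \sum_(j < b) `|A i j|.

Lemma rs_le_ninf (R : realType) a b (A : 'M[R]_(a, b)) i : rs A i <= ninf A.
Proof. by rewrite /ninf (bigD1 i) //= le_max lexx. Qed.

Lemma ninf_le (R : realType) a b (A : 'M[R]_(a, b)) B :
  0 <= B -> (forall i, rs A i <= B) -> ninf A <= B.
Proof.
move=> B0 H; rewrite /ninf; elim/big_ind: _ => //.
  by move=> x y hx hy; rewrite ge_max hx hy.
by move=> i _; apply: H.
Qed.

Lemma ninf_ge0 (R : realType) a b (A : 'M[R]_(a, b)) : 0 <= ninf A.
Proof.
rewrite /ninf; elim/big_ind: _ => //.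
  by move=> x y hx hy; rewrite le_max hx.
by move=> i _; rewrite sumr_ge0.
Qed.

Lemma rs_col (R : realType) a (v : 'cV[R]_a) i : rs v i = `|v i ord0|.
Proof. by rewrite /rs big_ord1. Qed.

Lemma col_le_ninf (R : realType) a (v : 'cV[R]_a) i : `|v i ord0| <= ninf v.
Proof. by rewrite -rs_col rs_le_ninf. Qed.

Lemma rs_row_mx (R : realType) a b c (A : 'M[R]_(a, b)) (B : 'M[R]_(a, c)) i :
  rs (row_mx A B) i = rs A i + rs B i.
Proof.
rewrite /rs big_split_ord /=; congr (_ + _); apply: eq_bigr => j _.
  by rewrite row_mxEl.
by rewrite row_mxEr.
Qed.

Lemma rs_scale (R : realType) a b (c : R) (A : 'M[R]_(a, b)) i :
  rs (c *: A) i = `|c| * rs A i.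
Proof. by rewrite /rs mulr_sumr; apply: eq_bigr => j _; rewrite mxE normrM. Qed.

Lemma mul_bound (R : realType) a b (A : 'M[R]_(a, b)) (v : 'cV[R]_b) r i :
  (forall j, `|v j ord0| <= r) -> `|(A *m v) i ord0| <= rs A i * r.
Proof.
move=> H; rewrite mxE /rs mulr_suml; apply: le_trans (ler_norm_sum _ _ _) _.
by apply: ler_sum => j _; rewrite normrM ler_wpM2l.
Qed.

Lemma gate_bound (R : realType) n m p (Wg : 'M[R]_(n,m)) (Ug : 'M[R]_n) (bg : 'cV[R]_n)
  (Lg : 'M[R]_(n,p)) (Wy : 'M[R]_(p,n)) (by_ : 'cV[R]_p) (umax dmax : R)
  (u : 'cV[R]_m) (h hh : 'cV[R]_n) (d dh : 'cV[R]_p) i :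
  0 <= umax -> 0 <= dmax -> ninf u <= umax -> ninf h <= 1 -> ninf hh <= 1 ->
  ninf d <= dmax -> ninf dh <= dmax ->
  sigmoid ((Wg *m u + Ug *m hh + bg + Lg *m ((Wy *m h + by_ + d) - (Wy *m hh + by_ + dh))) i ord0)
  <= sigma_hat_bar Wg Ug bg Lg Wy umax dmax.
Proof.
move=> u0 d0 Hu Hh Hhh Hd Hdh; rewrite /sigma_hat_bar; apply: sig_le.
have -> : Wg *m u + Ug *m hh + bg + Lg *m ((Wy *m h + by_ + d) - (Wy *m hh + by_ + dh))
  = Wg *m u + (Ug - Lg *m Wy) *m hh + bg + (Lg *m Wy) *m h + Lg *m (d - dh).
  rewrite mulmxBl -!mulmxA !mulmxBr !mulmxDr.
  move: (Wg *m u) (Ug *m hh) (Lg *m (Wy *m hh)) (Lg *m (Wy *m h)) (Lg *m by_) (Lg *m d) (Lg *m dh).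
  move=> A B C D E F G; apply/matrixP=> a b; rewrite !mxE; ring.
apply: le_trans (ler_norm _) _; apply: le_trans _ (rs_le_ninf _ i).
have d2 : 0 <= 2 * dmax by rewrite mulr_ge0.
rewrite !rs_row_mx !rs_scale rs_col (ger0_norm u0) (ger0_norm d2).
have Ha := mul_bound Wg i (fun j => le_trans (col_le_ninf u j) Hu).
have Hb := mul_bound (Ug - Lg *m Wy) i (fun j => le_trans (col_le_ninf hh j) Hhh).
have Hc := mul_bound (Lg *m Wy) i (fun j => le_trans (col_le_ninf h j) Hh).
have He : forall j, `|(d - dh) j ord0| <= 2 * dmax.
  move=> j; rewrite !mxE; apply: le_trans (ler_normB _ _) _.
  have := le_trans (col_le_ninf d j) Hd; have := le_trans (col_le_ninf dh j) Hdh; lra.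
have He' := mul_bound Lg i He.
move: (Wg *m u) (Ug - Lg *m Wy) (Lg *m Wy) ((Lg *m Wy) *m h) (Lg *m (d - dh)) ((Ug - Lg *m Wy) *m hh) Ha Hb Hc He'.
move=> A B C D E F Ha Hb Hc He2.
rewrite !mxE.
set a := A i ord0; set b := F i ord0; set c := bg i ord0; set x := D i ord0; set e := E i ord0.
have t1 := ler_normD (a + b + c + x) e.
have t2 := ler_normD (a + b + c) x.
have t3 := ler_normD (a + b) c.
have t4 := ler_normD a b.
lra.
Qed.

Lemma cand_bound (R : realType) n m (Wc : 'M[R]_(n,m)) (Uc : 'M[R]_n) (bc : 'cV[R]_n)
  (umax : R) (u : 'cV[R]_m) (hh : 'cV[R]_n) i :
  0 <= umax -> ninf u <= umax -> ninf hh <= 1 ->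
  `|tanhR ((Wc *m u + Uc *m hh + bc) i ord0)| <= sigma_c_bar Wc Uc bc umax.
Proof.
move=> u0 Hu Hhh; apply: tanh_norm; apply: le_trans _ (rs_le_ninf _ i).
rewrite !rs_row_mx rs_scale rs_col (ger0_norm u0).
have Ha := mul_bound Wc i (fun j => le_trans (col_le_ninf u j) Hu).
have Hb := mul_bound Uc i (fun j => le_trans (col_le_ninf hh j) Hhh).
move: (Wc *m u) (Uc *m hh) Ha Hb => A B Ha Hb; rewrite !mxE.
have t1 := ler_normD (A i ord0 + B i ord0) (bc i ord0).
have t2 := ler_normD (A i ord0) (B i ord0).
lra.
Qed.

Lemma hpE (R : realType) a b (A B : 'M[R]_(a,b)) i j : hprod A B i j = A i j * B i j.
Proof. by rewrite mxE. Qed.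
Lemma sigvE (R : realType) a b (A : 'M[R]_(a,b)) i j : sigv A i j = sigmoid (A i j).
Proof. by rewrite mxE. Qed.
Lemma tanhvE (R : realType) a b (A : 'M[R]_(a,b)) i j : tanhv A i j = tanhR (A i j).
Proof. by rewrite mxE. Qed.
Lemma addE (R : realType) a b (A B : 'M[R]_(a,b)) i j : (A + B) i j = A i j + B i j.
Proof. by rewrite mxE. Qed.

Unset Implicit Arguments. Set Strict Implicit.

Theorem lemma3 (R : realType) (n m p : nat)
  (Wf Wi Wo Wc : 'M[R]_(n, m)) (Uf Ui Uo Uc : 'M[R]_n)
  (bf bi bo bc : 'cV[R]_n) (Wy : 'M[R]_(p, n)) (by_ : 'cV[R]_p)
  (Lf Li Lo : 'M[R]_(n, p)) (Ld : 'M[R]_p) (umax dmax : R)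
  (u : nat -> 'cV[R]_m) (c h : nat -> 'cV[R]_n) (d w y : nat -> 'cV[R]_p)
  (ch hh : nat -> 'cV[R]_n) (dh : nat -> 'cV[R]_p)
  (* augmented LSTM model *)
  (Hc : forall k, c k.+1 = hprod (sigv (Wf *m u k + Uf *m h k + bf)) (c k)
                         + hprod (sigv (Wi *m u k + Ui *m h k + bi))
                                 (tanhv (Wc *m u k + Uc *m h k + bc)))
  (Hh : forall k, h k.+1 = hprod (sigv (Wo *m u k + Uo *m h k + bo)) (tanhv (c k.+1)))
  (Hd : forall k, d k.+1 = d k + w k)
  (Hy : forall k, y k = Wy *m h k + by_ + d k)
  (* observer *)
  (Hch : forall k, ch k.+1 =
      hprod (sigv (Wf *m u k + Uf *m hh k + bf
                   + Lf *m (y k - (Wy *m hh k + by_ + dh k)))) (ch k)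
    + hprod (sigv (Wi *m u k + Ui *m hh k + bi
                   + Li *m (y k - (Wy *m hh k + by_ + dh k))))
            (tanhv (Wc *m u k + Uc *m hh k + bc)))
  (Hhh : forall k, hh k.+1 =
      hprod (sigv (Wo *m u k + Uo *m hh k + bo
                   + Lo *m (y k - (Wy *m hh k + by_ + dh k)))) (tanhv (ch k.+1)))
  (Hdh : forall k, dh k.+1 = sat (dh k + Ld *m (y k - (Wy *m hh k + by_ + dh k))) dmax)
  (* inputs in U, true hidden state in H, disturbance in D, for all k *)
  (HU : forall k, ninf (u k) <= umax)
  (HH : forall k, ninf (h k) <= 1)
  (HD : forall k, ninf (d k) <= dmax) :
  let chat_bound := sigma_hat_bar Wi Ui bi Li Wy umax dmax * sigma_c_bar Wc Uc bc umax
                    / (1 - sigma_hat_bar Wf Uf bf Lf Wy umax dmax) in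
  (* positive invariance of I_hat = C_hat x H x D for the observer state *)
  ninf (ch 0) <= chat_bound -> ninf (hh 0) <= 1 -> ninf (dh 0) <= dmax ->
  forall k, ninf (ch k) <= chat_bound /\ ninf (hh k) <= 1 /\ ninf (dh k) <= dmax.

Proof.
move=> B H0c H0h H0d.
have u0 : 0 <= umax := le_trans (ninf_ge0 _) (HU 0%N).
have d0 : 0 <= dmax := le_trans (ninf_ge0 _) (HD 0%N).
have sf1 : sigma_hat_bar Wf Uf bf Lf Wy umax dmax < 1 := sig_lt1 _.
have sf0 : 0 < sigma_hat_bar Wf Uf bf Lf Wy umax dmax := sig_gt0 _.
have si0 : 0 < sigma_hat_bar Wi Ui bi Li Wy umax dmax := sig_gt0 _.
have sc0 : 0 <= sigma_c_bar Wc Uc bc umax := tanh_ge0 (ninf_ge0 _).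
have B0 : 0 <= B.
  rewrite /B divr_ge0 //; [exact: mulr_ge0 (ltW si0) sc0 | by rewrite subr_ge0 ltW].
have BE : sigma_hat_bar Wf Uf bf Lf Wy umax dmax * B
   + sigma_hat_bar Wi Ui bi Li Wy umax dmax * sigma_c_bar Wc Uc bc umax = B.
  rewrite /B; move: sf1 sf0 si0 sc0.
  move: (sigma_hat_bar Wf Uf bf Lf Wy umax dmax) (sigma_hat_bar Wi Ui bi Li Wy umax dmax)
        (sigma_c_bar Wc Uc bc umax) => a0 b0 c0 h1 h2 h3 h4.
  field; apply/eqP; lra.
elim=> [|k [IHc [IHh IHd]]]; first by split; [|split].
split; [|split].
- apply: ninf_le => // i; rewrite rs_col Hch Hy addE !hpE !sigvE !tanhvE.
  have Gf := gate_bound Wf Uf bf Lf Wy by_ i u0 d0 (HU k) (HH k) IHh (HD k) IHd.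
  have Gi := gate_bound Wi Ui bi Li Wy by_ i u0 d0 (HU k) (HH k) IHh (HD k) IHd.
  have Gc := cand_bound Wc Uc bc i u0 (HU k) IHh.
  have Ci : `|ch k i ord0| <= B := le_trans (col_le_ninf _ i) IHc.
  apply: le_trans (ler_normD _ _) _; rewrite (normrM (sigmoid _)) (normrM (sigmoid _)) !(gtr0_norm (sig_gt0 _)) -BE.
  apply: lerD; apply: ler_pM; by rewrite ?normr_ge0 ?(ltW (sig_gt0 _)).
- apply: ninf_le => // i; rewrite rs_col Hhh hpE sigvE tanhvE normrM gtr0_norm ?sig_gt0 //.
  by apply: mulr_ile1; rewrite ?normr_ge0 ?tanh_abs1 // ltW ?sig_gt0 ?sig_lt1.
- apply: ninf_le => // i; rewrite rs_col Hdh mxE /= ler_norml; apply/andP; split.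
    by rewrite le_max lexx.
  by rewrite ge_max ge_min lexx orbT andbT; lra.
Qed.
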